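(* Let $n \geq 3$, let $\overline{g}$ be the standard metric on the unit sphere $S^n\subset\mathbb{R}^{n+1}$, $f = x_{n+1}|_{S^n}$, $S_+^n = \{f\ge 0\}$. For $\delta > 0$ let $\tilde g_\delta$ be a smooth Riemannian metric on $S_+^n$ with $\tilde g_\delta = \overline{g}$ on $\{f \leq \delta\}$ and $\tilde g_\delta = (1 - e^{-\frac{1}{f-\delta}})^{\frac{4}{n-2}}\,\overline{g}$ on $\{\delta < f < 3\delta\}$. If $\delta > 0$ is sufficiently small, then the scalar curvature of $\tilde g_\delta$ is strictly greater than $n(n-1)$ in the region $\{\delta < f < 3\delta\}$. *)

(* Defs.v *)
From HB Require Import structures.
From mathcomp Require Import all_boot all_order all_algebra.
From mathcomp Require Import all_classical all_reals all_analysis.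
Set Implicit Arguments. Unset Strict Implicit. Unset Printing Implicit Defensive.
Import Order.TTheory GRing.Theory Num.Theory.
Import numFieldNormedType.Exports.
Local Open Scope ring_scope.

(* Local coordinates: stereographic projection of S^n from the south pole
   -e_{n+1}.  A point y in R^n corresponds to
   x = (2y/(1+|y|^2), (1-|y|^2)/(1+|y|^2)) in S^n; this chart covers
   S^n minus the south pole, hence all of S^n_+ = {x_{n+1} >= 0}. *)

Section Defs.
Variables (R : realType) (n : nat).

Definition sqnorm (y : 'rV[R]_n) : R := \sum_(i < n) (y 0 i) ^+ 2.

Definition sph_f (y : 'rV[R]_n) : R := (1 - sqnorm y) / (1 + sqnorm y).

Definition round_metric (y : 'rV[R]_n) : 'M[R]_n :=
  (4 / (1 + sqnorm y) ^+ 2) *: 1%:M.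

Definition conf_metric (delta : R) (y : 'rV[R]_n) : 'M[R]_n :=
  ((1 - expR (- (1 / (sph_f y - delta)))) `^ (4 / (n - 2)%:R)) *: round_metric y.

Definition pd (i : 'I_n) (F : 'rV[R]_n -> R) (y : 'rV[R]_n) : R :=
  'D_(delta_mx 0 i) F y.

Definition christoffel (g : 'rV[R]_n -> 'M[R]_n) (k i j : 'I_n)
    (y : 'rV[R]_n) : R :=
  (1 / 2) * \sum_(l < n) (invmx (g y)) k l *
     (pd i (fun z => g z j l) y + pd j (fun z => g z i l) y
      - pd l (fun z => g z i j) y).

Definition ricci (g : 'rV[R]_n -> 'M[R]_n) (i j : 'I_n) (y : 'rV[R]_n) : R :=
  \sum_(k < n) (pd k (christoffel g k i j) y - pd j (christoffel g k i k) y)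
  + \sum_(k < n) \sum_(l < n)
      (christoffel g k k l y * christoffel g l i j y
       - christoffel g k j l y * christoffel g l i k y).

Definition scalar_curvature (g : 'rV[R]_n -> 'M[R]_n) (y : 'rV[R]_n) : R :=
  \sum_(i < n) \sum_(j < n) (invmx (g y)) i j * ricci g i j y.

End Defs.

(* Main.v *)
Require Import Defs.
From HB Require Import structures.
From mathcomp Require Import all_boot all_order all_algebra.
From mathcomp Require Import all_classical all_reals all_analysis.
From mathcomp Require Import ring lra.
Import Order.TTheory GRing.Theory Num.Theory.
Import numFieldNormedType.Exports.
Local Open Scope ring_scope.
Set Implicit Arguments. Unset Strict Implicit. Unset Printing Implicit Defensive.

Section D.
Variable R : realType.
Implicit Types (f g : R -> R) (x a b : R).

Lemma dM x f g a b : is_derive x 1 f a -> is_derive x 1 g b ->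
  is_derive x 1 (fun y => f y * g y) (f x * b + g x * a).
Proof. by move=> ? ?; exact: (@is_deriveM _ _ f g). Qed.

Lemma dD x f g a b : is_derive x 1 f a -> is_derive x 1 g b ->
  is_derive x 1 (fun y => f y + g y) (a + b).
Proof. by move=> ? ?; exact: (@is_deriveD _ _ _ f g). Qed.

Lemma dB x f g a b : is_derive x 1 f a -> is_derive x 1 g b ->
  is_derive x 1 (fun y => f y - g y) (a - b).
Proof. by move=> ? ?; exact: (@is_deriveB _ _ _ f g). Qed.

Lemma dN x f a : is_derive x 1 f a -> is_derive x 1 (fun y => - f y) (- a).
Proof. by move=> ?; exact: (@is_deriveN _ _ _ f). Qed.

Lemma dC x (c : R) : is_derive x 1 (fun _ : R => c) 0.
Proof. exact: is_derive_cst. Qed.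

Lemma dI x : is_derive x 1 (fun y : R => y) 1.
Proof. exact: is_derive_id. Qed.

Lemma dV x f a : is_derive x 1 f a -> f x != 0 ->
  is_derive x 1 (fun y => (f y)^-1) (- a / (f x) ^+ 2).
Proof.
move=> H2 H1; have := is_deriveV H1 H2.
by rewrite /GRing.scale /= mulrC mulrN mulNr.
Qed.

Lemma dComp x f g a b : is_derive (g x) 1 f a -> is_derive x 1 g b ->
  is_derive x 1 (fun y => f (g y)) (a * b).
Proof. by move=> ? ?; exact: (@is_derive1_comp _ f g). Qed.

Lemma dExp x f a : is_derive x 1 f a ->
  is_derive x 1 (fun y => expR (f y)) (expR (f x) * a).
Proof. by move=> H; exact: (dComp (is_derive_expR _) H). Qed.

Lemma dPow x f a (p : R) : is_derive x 1 f a -> 0 < f x ->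
  is_derive x 1 (fun y => f y `^ p) (p * f x `^ (p - 1) * a).
Proof. by move=> H2 H1; exact: (dComp (is_derive1_powR p H1) H2). Qed.



End D.

Section F1.
Variables (R : realType) (c p : R).

Definition Ff (s : R) := (1 - s) / (1 + s).
Definition tf (s : R) := Ff s - c.
Definition Ee (s : R) := expR (- (1 / tf s)).
Definition Uu (s : R) := 1 - Ee s.
Definition Qq (s : R) := 4 / (1 + s) ^+ 2.
Definition Phi (s : R) := Uu s `^ p * Qq s.
Definition T1 (s : R) := -2 / (1 + s) ^+ 2.
Definition T2 (s : R) := 4 / (1 + s) ^+ 3.
Definition U1 (s : R) := - (Ee s * T1 s / tf s ^+ 2).
Definition U2 (s : R) := - (Ee s * (T1 s ^+ 2 / tf s ^+ 4 + T2 s / tf s ^+ 2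
                                    - 2 * T1 s ^+ 2 / tf s ^+ 3)).
Definition Aa (s : R) := p * U1 s / Uu s - 2 / (1 + s).
Definition A1 (s : R) := p * (U2 s * Uu s - U1 s ^+ 2) / Uu s ^+ 2 + 2 / (1 + s) ^+ 2.

Lemma dsq (x : R) (f : R -> R) (a : R) : is_derive x 1 f a ->
  is_derive x 1 (fun y => f y ^+ 2) (2 * f x * a).
Proof.
move=> H.
have -> : (fun y => f y ^+ 2) = (fun y => f y * f y) by apply/funext => y; rewrite expr2.
by apply: (is_derive_eq (dM H H)); ring.
Qed.

Section At.
Variable s : R.
Hypothesis s0 : 0 <= s.
Hypothesis t0 : 0 < tf s.

Lemma s1_neq0 : 1 + s != 0. Proof. by rewrite gt_eqF // ltr_wpDr. Qed.
Lemma t_neq0 : tf s != 0. Proof. by rewrite gt_eqF. Qed.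
Lemma E_gt0 : 0 < Ee s. Proof. exact: expR_gt0. Qed.
Lemma E_lt1 : Ee s < 1.
Proof. by rewrite /Ee expR_lt1 oppr_lt0 mul1r invr_gt0. Qed.
Lemma U_gt0 : 0 < Uu s. Proof. by rewrite /Uu subr_gt0 E_lt1. Qed.
Lemma U_lt1 : Uu s < 1. Proof. by rewrite /Uu ltrBlDr ltrDl E_gt0. Qed.

Lemma d1s (x : R) : is_derive x 1 (fun y : R => 1 + y) 1.
Proof. by apply: (is_derive_eq (dD (dC x 1) (dI x))); rewrite add0r. Qed.

Lemma dFf : is_derive s 1 Ff (T1 s).
Proof.
have H := dM (dB (dC s 1) (dI s)) (dV (d1s s) s1_neq0).
apply: (is_derive_eq H).
rewrite /T1; have := s1_neq0; move=> h; field; exact: h.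
Qed.

Lemma dtf : is_derive s 1 tf (T1 s).
Proof. by apply: (is_derive_eq (dB dFf (dC s c))); rewrite subr0. Qed.

Lemma s2_neq0 : (1 + s) ^+ 2 != 0. Proof. by rewrite expf_neq0 // s1_neq0. Qed.
Lemma t2_neq0 : tf s ^+ 2 != 0. Proof. by rewrite expf_neq0 // t_neq0. Qed.

Lemma dT1 : is_derive s 1 T1 (T2 s).
Proof.
have H := dM (dC s (-2)) (dV (dsq (d1s s)) s2_neq0).
apply: (is_derive_eq H).
rewrite /T2; have := s1_neq0; move=> h; field; exact: h.
Qed.

Lemma dE : is_derive s 1 Ee (Ee s * T1 s / tf s ^+ 2).
Proof.
have H := dExp (dN (dM (dC s 1) (dV dtf t_neq0))).
apply: (is_derive_eq H).
rewrite /Ee; have := t_neq0; move=> h; field; exact: h.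
Qed.

Lemma dU : is_derive s 1 Uu (U1 s).
Proof. by apply: (is_derive_eq (dB (dC s 1) dE)); rewrite /U1 sub0r. Qed.

Lemma dU1 : is_derive s 1 U1 (U2 s).
Proof.
have H := dN (dM (dM dE dT1) (dV (dsq dtf) t2_neq0)).
apply: (is_derive_eq H).
rewrite /U2; have := t_neq0; move=> h; field; exact: h.
Qed.

Lemma U_neq0 : Uu s != 0. Proof. by rewrite gt_eqF // U_gt0. Qed.

Lemma dPhi : is_derive s 1 Phi (Phi s * Aa s).
Proof.
have H := dM (dPow p dU U_gt0) (dM (dC s 4) (dV (dsq (d1s s)) s2_neq0)).
apply: (is_derive_eq H).
have -> : Uu s `^ (p - 1) = Uu s `^ p / Uu s.
  by rewrite powRB ?U_neq0 ?implybT // powRr1 // ltW // U_gt0.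
rewrite /Phi /Aa /Qq; have := U_neq0; have := s1_neq0; move=> h1 h2; field.
by rewrite h1 h2.
Qed.

Lemma dA : is_derive s 1 Aa (A1 s).
Proof.
have H := dB (dM (dM (dC s p) dU1) (dV dU U_neq0)) (dM (dC s 2) (dV (d1s s) s1_neq0)).
apply: (is_derive_eq H).
rewrite /A1; have := U_neq0; have := s1_neq0; move=> h1 h2; field.
by rewrite h1 h2.
Qed.

Lemma Phi_gt0 : 0 < Phi s.
Proof.
rewrite /Phi /Qq mulr_gt0 ?powR_gt0 ?U_gt0 //.
by rewrite divr_gt0 // exprn_gt0 // ltr_wpDr.
Qed.

Variable N : R.
Definition Xx := (2 - 2 * N) * (2 * s * A1 s + N * Aa s) + (2 - N) * (N - 1) * Aa s ^+ 2 * s.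
Definition Kk := - 4 * s * U2 s - 2 * N * U1 s + 4 * (N - 2) * s * U1 s / (1 + s).

Lemma Xx_id : Xx = N * (N - 1) * Qq s + (N - 1) * (p / Uu s) * Kk
   + (N - 1) * s * p * (U1 s / Uu s) ^+ 2 * (4 - p * (N - 2)).
Proof.
rewrite /Xx /Kk /Aa /A1 /Qq; have := U_neq0; have := s1_neq0; move=> h1 h2; field.
by rewrite h1 h2.
Qed.

Lemma Kk_id : Kk = Ee s * 4 / ((1 + s) ^+ 2 * tf s ^+ 4) *
   ((1 - Ff s ^+ 2) * (1 - 2 * tf s) - N * Ff s * tf s ^+ 2).
Proof.
rewrite /Kk /U2 /U1 /T1 /T2 /tf /Ff.
have := t_neq0; rewrite /tf /Ff; have := s1_neq0; move=> h1 h2; field.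
rewrite h1 /=.
have -> : 1 - s + - c * (1 + s) = ((1 - s) / (1 + s) - c) * (1 + s) by field.
by rewrite mulf_neq0.
Qed.

Lemma bracket_pos : 0 < c -> c < Ff s -> Ff s < 3 * c -> 3 <= N -> N * c < 1/10 ->
  0 < (1 - Ff s ^+ 2) * (1 - 2 * tf s) - N * Ff s * tf s ^+ 2.
Proof.
move=> c0 h1 h2 h3 h4.
have ht : tf s < 2 * c by rewrite /tf; lra.
have ht0 : 0 < tf s by [].
have hc : c < 1/30 by nra.
have hf : Ff s < 1/10 by lra.
have hf0 : 0 < Ff s by lra.
have e1 : 99/100 < 1 - Ff s ^+ 2 by nra.
have e2 : 4/5 < 1 - 2 * tf s by lra.
have e3 : 79/100 < (1 - Ff s ^+ 2) * (1 - 2 * tf s) by nra.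
have e4 : N * Ff s < 3/10 by nra.
have e5 : tf s ^+ 2 < 1/100 by nra.
have e6 : N * Ff s * tf s ^+ 2 < 3/1000.
  have : 0 <= N * Ff s by nra.
  nra.
lra.
Qed.

Lemma Kk_pos : 0 < c -> c < Ff s -> Ff s < 3 * c -> 3 <= N -> N * c < 1/10 -> 0 < Kk.
Proof.
move=> c0 h1 h2 h3 h4; rewrite Kk_id.
apply: mulr_gt0; last exact: bracket_pos.
apply: divr_gt0; first by rewrite mulr_gt0 // E_gt0.
by rewrite mulr_gt0 // exprn_gt0 // ltr_wpDr.
Qed.

Lemma key : 0 < c -> c < Ff s -> Ff s < 3 * c -> 3 <= N -> N * c < 1/10 ->
  p * (N - 2) = 4 -> N * (N - 1) * Phi s < Xx.
Proof.
move=> c0 h1 h2 h3 h4 hp.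
have p0 : 0 < p by nra.
rewrite Xx_id hp subrr mulr0 addr0.
have Wlt : Uu s `^ p < 1.
  have := @gt0_ltr_powR _ p p0 (Uu s) 1.
  rewrite powR1 => H; apply: H; rewrite ?nnegrE ?ler01 ?U_lt1 //.
  by rewrite ltW // U_gt0.
have Q0 : 0 < Qq s by rewrite /Qq divr_gt0 // exprn_gt0 // ltr_wpDr.
have NN : 0 < N * (N - 1) by nra.
have K0 := Kk_pos c0 h1 h2 h3 h4.
have T : 0 < (N - 1) * (p / Uu s) * Kk.
  apply: mulr_gt0 K0; apply: mulr_gt0; [lra | exact: divr_gt0 p0 U_gt0].
have H5 : 0 < N * (N - 1) * Qq s * (1 - (Uu s `^ p)).
  apply: mulr_gt0; first exact: mulr_gt0.
  rewrite subr_gt0; exact: Wlt.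
rewrite /Phi; lra.
Qed.

End At.
End F1.

Section Alg.
Variables (R : realType) (n : nat) (a : 'I_n -> R) (d : 'I_n -> 'I_n -> R).
Local Notation N := (n%:R : R).
Definition Gv (k i j : 'I_n) : R := (j == k)%:R * a i + (i == k)%:R * a j - (i == j)%:R * a k.
Definition Dv (m k i j : 'I_n) : R := (j == k)%:R * d m i + (i == k)%:R * d m j - (i == j)%:R * d m k.

Lemma skron (k : 'I_n) (F : 'I_n -> R) : \sum_(l < n) (k == l)%:R * F l = F k.
Proof.
rewrite (bigD1 k) //= eqxx mul1r big1 ?addr0 // => l /negbTE.
by rewrite eq_sym => ->; rewrite mul0r.
Qed.

Lemma sconst (x : R) : \sum_(l < n) x = N * x.
Proof. by rewrite sumr_const card_ord mulr_natl. Qed.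

Lemma stepA (i : 'I_n) : \sum_(k < n) Dv k k i i = 2 * d i i - \sum_(k < n) d k k.
Proof.
have pw : forall k, Dv k k i i = (i == k)%:R * (2 * d k i) - d k k.
  by move=> k; rewrite /Dv eqxx /=; ring.
by rewrite (eq_bigr _ (fun k _ => pw k)) sumrB skron.
Qed.

Lemma stepB (i : 'I_n) : \sum_(k < n) Dv i k i k = N * d i i.
Proof.
have pw : forall k, Dv i k i k = d i i by move=> k; rewrite /Dv eqxx /=; ring.
by rewrite (eq_bigr _ (fun k _ => pw k)) sconst.
Qed.

Lemma stepC (k l : 'I_n) : Gv k k l = a l.
Proof. by rewrite /Gv eqxx [l == k]eq_sym /=; ring. Qed.

Local Notation S := (\sum_(l < n) a l ^+ 2).

Lemma stepD (i : 'I_n) : \sum_(l < n) a l * Gv l i i = 2 * a i ^+ 2 - S.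
Proof.
have pw : forall l, a l * Gv l i i = (i == l)%:R * (2 * a l * a i) - a l ^+ 2.
  by move=> l; rewrite /Gv eqxx /=; ring.
by rewrite (eq_bigr _ (fun l _ => pw l)) sumrB skron; ring.
Qed.

Lemma stepE (i k : 'I_n) : \sum_(l < n) Gv k i l * Gv l i k =
  a i ^+ 2 - a k ^+ 2 + (i == k)%:R * (2 * a i * a k - S).
Proof.
have pw : forall l, Gv k i l * Gv l i k =
  (k == l)%:R * (a i * a i + (i == l)%:R * a i * a k - (i == k)%:R * a i * a l)
  + (i == k)%:R * ((k == l)%:R * (a l * a i) + (i == l)%:R * (a l * a k) - (i == k)%:R * (a l * a l))
  - (i == l)%:R * (a k * ((k == l)%:R * a i + (i == l)%:R * a k - (i == k)%:R * a l)).
  move=> l; rewrite /Gv [l == k]eq_sym.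
  by case: (k == l); case: (i == l); case: (i == k); rewrite /=; ring.
rewrite (eq_bigr _ (fun l _ => pw l)) sumrB big_split /= !skron -mulr_sumr.
rewrite sumrB big_split /= !skron -mulr_sumr.
have hS : \sum_(l < n) a l * a l = S by apply: eq_bigr => l _; rewrite expr2.
rewrite hS eqxx [k == i]eq_sym.
by case: (i == k); rewrite /=; ring.
Qed.

Lemma trace_ricci :
  \sum_(i < n) (\sum_(k < n) (Dv k k i i - Dv i k i k)
     + \sum_(k < n) \sum_(l < n) (Gv k k l * Gv l i i - Gv k i l * Gv l i k))
  = (2 - 2 * N) * \sum_(i < n) d i i + (2 - N) * (N - 1) * S.
Proof.
have pw : forall i, \sum_(k < n) (Dv k k i i - Dv i k i k)
     + \sum_(k < n) \sum_(l < n) (Gv k k l * Gv l i i - Gv k i l * Gv l i k)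
   = 2 * d i i - \sum_(k < n) d k k - N * d i i
     + (N * (2 * a i ^+ 2 - S) - (N * a i ^+ 2 - S + (2 * a i ^+ 2 - S))).
  move=> i; rewrite sumrB stepA stepB; congr (_ + _).
  under eq_bigr do rewrite sumrB.
  rewrite sumrB.
  under eq_bigr do (under eq_bigr do rewrite stepC; rewrite stepD).
  rewrite sconst; congr (_ - _).
  under eq_bigr do rewrite stepE.
  rewrite big_split sumrB /= skron sconst; congr (_ + _).
  ring.
have pw2 : forall i : 'I_n, 2 * d i i - \sum_(k < n) d k k - N * d i i
     + (N * (2 * a i ^+ 2 - S) - (N * a i ^+ 2 - S + (2 * a i ^+ 2 - S)))
   = (2 - N) * d i i + (N - 2) * a i ^+ 2 - (\sum_(k < n) d k k + (N - 2) * S).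
  by move=> i; ring.
rewrite (eq_bigr _ (fun i _ => pw i)) (eq_bigr _ (fun i _ => pw2 i)).
rewrite sumrB big_split /= -!mulr_sumr sconst.
ring.
Qed.
End Alg.

Section S.
Variables (R : realType) (n : nat).
Local Notation e k := (delta_mx 0 k : 'rV[R]_n).

Lemma line_coord (k i : 'I_n) (h : R) (z : 'rV[R]_n) :
  (h *: e k + z) 0 i = z 0 i + h * (k == i)%:R.
Proof. by rewrite !mxE eqxx /= addrC eq_sym. Qed.

Lemma sum_kron (k : 'I_n) (F : 'I_n -> R) :
  \sum_(l < n) (k == l)%:R * F l = F k.
Proof.
rewrite (bigD1 k) //= eqxx mul1r big1 ?addr0 // => l /negbTE.
by rewrite eq_sym => ->; rewrite mul0r.
Qed.

Lemma sum_kron' (k : 'I_n) (F : 'I_n -> R) :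
  \sum_(l < n) (l == k)%:R * F l = F k.
Proof. by rewrite -[RHS](sum_kron k); apply: eq_bigr => l _; rewrite eq_sym. Qed.

Lemma sqnorm_line (k : 'I_n) (h : R) (z : 'rV[R]_n) :
  sqnorm (h *: e k + z) = sqnorm z + 2 * h * z 0 k + h ^+ 2.
Proof.
rewrite /sqnorm.
under eq_bigr do rewrite line_coord sqrrD.
rewrite !big_split /= -!addrA; congr (_ + _).
have E1 : \sum_(i < n) z 0 i * (h * (k == i)%:R) = \sum_(i < n) (k == i)%:R * (h * z 0 i).
  by apply: eq_bigr => i _; ring.
have E2 : \sum_(i < n) (h * (k == i)%:R) ^+ 2 = \sum_(i < n) (k == i)%:R * h ^+ 2.
  apply: eq_bigr => i _; case: (k == i); rewrite /= ?mulr1 ?mulr0 ?mul1r ?mul0r //.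
  by rewrite expr0n.
rewrite E1 E2 !sum_kron; ring.
Qed.


Lemma pd_line (k : 'I_n) (F : 'rV[R]_n -> R) (z : 'rV[R]_n) :
  pd k F z = 'D_1 (fun h : R => F (h *: e k + z)) 0.
Proof.
rewrite /pd /derive scale0r add0r.
have E : (fun h : R => h^-1 *: ((F \o shift z) (h *: 'e_k) - F z)) =
  (fun h : R => h^-1 *: (((fun h0 : R => F (h0 *: 'e_k + z)) \o shift 0) h%:A - F z)).
  by apply/funext => h /=; rewrite /shift /= addr0 -[h%:A]/(h * 1) mulr1.
by rewrite E.
Qed.


Lemma pd_near (k : 'I_n) (F G : 'rV[R]_n -> R) (z : 'rV[R]_n) :
  (\forall h \near 0, F (h *: e k + z) = G (h *: e k + z)) -> pd k F z = pd k G z.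
Proof. by move=> H; rewrite !pd_line; apply: near_eq_derive. Qed.

Lemma pd_is (k : 'I_n) (F : 'rV[R]_n -> R) (z : 'rV[R]_n) d :
  is_derive (0 : R) 1 (fun h : R => F (h *: e k + z)) d -> pd k F z = d.
Proof. by move=> H; rewrite pd_line; exact: derive_val. Qed.

Lemma dq (k : 'I_n) (z : 'rV[R]_n) :
  is_derive (0 : R) 1 (fun h : R => sqnorm (h *: e k + z)) (2 * z 0 k).
Proof.
have -> : (fun h : R => sqnorm (h *: e k + z)) =
   (fun h => sqnorm z + 2 * h * z 0 k + h ^+ 2).
  by apply/funext => h; rewrite sqnorm_line.
have H := dD (dD (dC 0 (sqnorm z)) (dM (dM (dC 0 2) (dI 0)) (dC 0 (z 0 k)))) (dsq (dI (0 : R))).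
by apply: (is_derive_eq H); ring.
Qed.

Lemma sqnorm_ge0 (z : 'rV[R]_n) : 0 <= sqnorm z.
Proof. by apply: sumr_ge0 => i _; rewrite sqr_ge0. Qed.

Lemma sqnorm0 (k : 'I_n) (z : 'rV[R]_n) : sqnorm (0 *: e k + z) = sqnorm z.
Proof. by rewrite scale0r add0r. Qed.

Variable c : R.
Definition reg (z : 'rV[R]_n) := c < sph_f z /\ sph_f z < 3 * c.

Lemma near_reg (k : 'I_n) (z : 'rV[R]_n) : reg z ->
  \forall h \near (0 : R), reg (h *: e k + z).
Proof.
move=> [h1 h2].
have t0 : 0 < tf c (sqnorm z) by rewrite /tf subr_gt0.
have HF : is_derive (sqnorm (0 *: e k + z)) 1 (@Ff R) (T1 (sqnorm z)).
  by rewrite sqnorm0; exact: (dFf (sqnorm_ge0 z)).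
have D := dComp HF (dq k z).
have Hc : {for 0, continuous (fun h : R => Ff (sqnorm (h *: e k + z)))}.
  apply: differentiable_continuous; apply/derivable1_diffP; case: D => D1 _; exact: D1.
near=> h; split.
  near: h; have := cvgr_gt _ Hc; rewrite /= sqnorm0; apply; exact: h1.
near: h; have := cvgr_lt _ Hc; rewrite /= sqnorm0; apply; exact: h2.
Unshelve. all: by end_near.
Qed.

Local Notation pp := (4 / (n - 2)%:R : R).
Local Notation PH z := (Phi c pp (sqnorm z)).
Local Notation AA z := (Aa c pp (sqnorm z)).

Lemma conf_eq (z : 'rV[R]_n) : conf_metric c z = PH z *: 1%:M.
Proof. by rewrite /conf_metric /round_metric scalerA. Qed.

Lemma scal_entry (a : R) (j l : 'I_n) : (a *: 1%:M : 'M[R]_n) j l = a * (j == l)%:R.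
Proof. by rewrite !mxE; case: (j == l); rewrite ?mulr1n ?mulr0n. Qed.

Lemma reg_t0 (z : 'rV[R]_n) : reg z -> 0 < tf c (sqnorm z).
Proof. by move=> [h1 _]; rewrite /tf subr_gt0. Qed.

Variable gt : 'rV[R]_n -> 'M[R]_n.
Hypothesis hgt : forall w, reg w -> gt w = conf_metric c w.

Lemma pd_g (k j l : 'I_n) (z : 'rV[R]_n) : reg z ->
  pd k (fun w => gt w j l) z = (j == l)%:R * (PH z * AA z * (2 * z 0 k)).
Proof.
move=> rz.
rewrite (@pd_near k _ (fun w => PH w * (j == l)%:R)); last first.
  have := near_reg k rz; apply: filterS => h rh.
  by rewrite hgt // conf_eq scal_entry.
apply: pd_is.
have HP : is_derive (sqnorm (0 *: e k + z)) 1 (Phi c pp) (PH z * AA z).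
  by rewrite sqnorm0; exact: (dPhi _ (sqnorm_ge0 z) (reg_t0 rz)).
have H := dM (dComp HP (dq k z)) (dC 0 ((j == l)%:R : R)).
by apply: (is_derive_eq H); ring.
Qed.

Lemma Phi_pos (z : 'rV[R]_n) : reg z -> 0 < PH z.
Proof. by move=> rz; exact: (Phi_gt0 _ (sqnorm_ge0 z) (reg_t0 rz)). Qed.

Lemma inv_gt (z : 'rV[R]_n) : reg z -> invmx (gt z) = (PH z)^-1 *: 1%:M.
Proof. by move=> rz; rewrite hgt // conf_eq scalemx1 invmx_scalar scalemx1. Qed.

Definition av (m : 'I_n) (w : 'rV[R]_n) := AA w * w 0 m.
Definition GG (k i j : 'I_n) (w : 'rV[R]_n) :=
  (j == k)%:R * av i w + (i == k)%:R * av j w - (i == j)%:R * av k w.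

Lemma chr (k i j : 'I_n) (z : 'rV[R]_n) : reg z -> christoffel gt k i j z = GG k i j z.
Proof.
move=> rz; rewrite /christoffel inv_gt //.
under eq_bigr do rewrite scal_entry !pd_g //.
set P := PH z; set A := AA z.
have E : forall l : 'I_n, P^-1 * (k == l)%:R *
     ((j == l)%:R * (P * A * (2 * z 0 i)) + (i == l)%:R * (P * A * (2 * z 0 j)) -
      (i == j)%:R * (P * A * (2 * z 0 l))) =
   (k == l)%:R * (P^-1 * ((j == l)%:R * (P * A * (2 * z 0 i)) + (i == l)%:R * (P * A * (2 * z 0 j)) -
      (i == j)%:R * (P * A * (2 * z 0 l)))).
  by move=> l; ring.
under eq_bigr do rewrite E.
rewrite sum_kron /GG /av -/A.
have := Phi_pos rz; rewrite -/P => P0.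
rewrite [j == k]eq_sym [i == k]eq_sym.
field; by rewrite gt_eqF.
Qed.

Local Notation A1z z := (A1 c pp (sqnorm z)).
Definition dav (m i : 'I_n) (y : 'rV[R]_n) :=
  A1z y * (2 * y 0 m) * y 0 i + AA y * (m == i)%:R.

Lemma d_av (m i : 'I_n) (y : 'rV[R]_n) : reg y ->
  is_derive (0 : R) 1 (fun h : R => av i (h *: e m + y)) (dav m i y).
Proof.
move=> ry.
have -> : (fun h : R => av i (h *: e m + y)) =
   (fun h => Aa c pp (sqnorm (h *: e m + y)) * (y 0 i + h * (m == i)%:R)).
  by apply/funext => h; rewrite /av line_coord.
have HA : is_derive (sqnorm (0 *: e m + y)) 1 (Aa c pp) (A1z y).
  by rewrite sqnorm0; exact: (dA _ (sqnorm_ge0 y) (reg_t0 ry)).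
have H := dM (dComp HA (dq m y)) (dD (dC 0 (y 0 i)) (dM (dI 0) (dC 0 ((m == i)%:R : R)))).
apply: (is_derive_eq H); rewrite sqnorm0 /dav; ring.
Qed.

Definition DG (m k i j : 'I_n) (y : 'rV[R]_n) :=
  (j == k)%:R * dav m i y + (i == k)%:R * dav m j y - (i == j)%:R * dav m k y.

Lemma pd_GG (m k i j : 'I_n) (y : 'rV[R]_n) : reg y ->
  pd m (GG k i j) y = DG m k i j y.
Proof.
move=> ry; apply: pd_is.
have H := dB (dD (dM (dC 0 ((j == k)%:R : R)) (d_av m i ry))
                 (dM (dC 0 ((i == k)%:R : R)) (d_av m j ry)))
             (dM (dC 0 ((i == j)%:R : R)) (d_av m k ry)).
by apply: (is_derive_eq H); rewrite /DG; ring.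
Qed.

Lemma pd_chr (m k i j : 'I_n) (y : 'rV[R]_n) : reg y ->
  pd m (christoffel gt k i j) y = DG m k i j y.
Proof.
move=> ry; rewrite -pd_GG //; apply: pd_near.
have := near_reg m ry; apply: filterS => h rh.
by rewrite chr.
Qed.

Local Notation N := (n%:R : R).

Lemma ricci_ii (i : 'I_n) (y : 'rV[R]_n) : reg y ->
  ricci gt i i y =
  \sum_(k < n) (Dv (fun m j => dav m j y) k k i i - Dv (fun m j => dav m j y) i k i k)
  + \sum_(k < n) \sum_(l < n) (Gv (fun m => av m y) k k l * Gv (fun m => av m y) l i i
                     - Gv (fun m => av m y) k i l * Gv (fun m => av m y) l i k).
Proof.
move=> ry; rewrite /ricci; congr (_ + _).
  by apply: eq_bigr => k _; rewrite !pd_chr.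
apply: eq_bigr => k _; apply: eq_bigr => l _.
by rewrite !chr.
Qed.

Lemma scal_formula (y : 'rV[R]_n) : reg y ->
  scalar_curvature gt y = (PH y)^-1 * Xx c pp (sqnorm y) N.
Proof.
move=> ry; rewrite /scalar_curvature inv_gt //.
have E1 : forall i : 'I_n, \sum_(j < n) ((PH y)^-1 *: 1%:M : 'M[R]_n) i j * ricci gt i j y
    = (PH y)^-1 * ricci gt i i y.
  move=> i; under eq_bigr do rewrite scal_entry.
  have E : forall j : 'I_n, (PH y)^-1 * (i == j)%:R * ricci gt i j y =
     (i == j)%:R * ((PH y)^-1 * ricci gt i j y) by move=> j; ring.
  by under eq_bigr do rewrite E; rewrite skron.
rewrite (eq_bigr _ (fun i _ => E1 i)) -mulr_sumr; congr (_ * _).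
rewrite (eq_bigr _ (fun i _ => ricci_ii i ry)) trace_ricci.
have Hd : \sum_(i < n) dav i i y = 2 * sqnorm y * A1z y + N * AA y.
  rewrite /dav big_split /=.
  have -> : 2 * sqnorm y * A1z y = \sum_(i < n) (2 * A1z y) * y 0 i ^+ 2.
    by rewrite -mulr_sumr /sqnorm; ring.
  congr (_ + _); first by apply: eq_bigr => i _; ring.
  by under eq_bigr do rewrite eqxx /= mulr1; rewrite sconst.
have HS : \sum_(i < n) av i y ^+ 2 = AA y ^+ 2 * sqnorm y.
  by rewrite /sqnorm mulr_sumr; apply: eq_bigr => i _; rewrite /av; ring.
rewrite Hd HS /Xx; ring.
Qed.
End S.

Unset Implicit Arguments.
Theorem proposition4p2 (R : realType) (n : nat) (hn : (3 <= n)%N) :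
  exists delta0 : R, 0 < delta0 /\
    forall delta : R, 0 < delta -> delta < delta0 ->
    forall gt : 'rV[R]_n -> 'M[R]_n,
      (forall y, 0 <= sph_f y -> sph_f y <= delta -> gt y = round_metric y) ->
      (forall y, delta < sph_f y -> sph_f y < 3 * delta ->
         gt y = conf_metric delta y) ->
      forall y : 'rV[R]_n, delta < sph_f y -> sph_f y < 3 * delta ->
        (n * (n - 1))%:R < scalar_curvature gt y.
Proof.
have N3 : (3 : R) <= n%:R by rewrite (ler_nat R 3 n).
have N0 : (0 : R) < 10 * n%:R by lra.
exists (10 * n%:R)^-1; split; first by rewrite invr_gt0.
move=> delta d0 dlt gt _ H2 y hy1 hy2.
have ry : reg delta y by split.
have hgt : forall w, reg delta w -> gt w = conf_metric delta w.
  by move=> w [a b]; exact: H2.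
rewrite (scal_formula hgt ry).
have hd : n%:R * delta < 1 / 10.
  move: dlt; rewrite -[X in _ < X]mulr1 ltr_pdivlMl // => h; lra.
have hp : 4 / (n - 2)%:R * (n%:R - 2) = 4 :> R.
  rewrite natrB; last by apply: leq_trans hn.
  have : (n%:R - 2%:R : R) != 0 by rewrite subr_eq0 gt_eqF // ltr_nat; apply: leq_trans hn.
  by move=> h; field.
have t0 := reg_t0 ry.
have K := key (sqnorm_ge0 y) t0 d0 hy1 hy2 N3 hd hp.
have P0 : 0 < Phi delta (4 / (n - 2)%:R) (sqnorm y) := Phi_gt0 _ (sqnorm_ge0 y) t0.
rewrite ltr_pdivlMl // natrM (@natrB _ n 1); last by apply: leq_trans hn.
by rewrite mulrC; exact: K.
Qed.
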